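(* For arbitrarily large values of $|V|$ there exists a partition exchange economy with pairwise exchanges and only $n=3$ organizations whose $\big(\tfrac{|V|}{18}-3\big)$-supplemented core is empty.
   Context: Pairwise partition exchange economy: a set of organizations $N=\{1,\dots,n\}$; pairwise disjoint finite sets $V^1,\dots,V^n$, $V=\bigcup_i V^i$; subsets $U^i\subseteq V^i$ (patient vertices of organization $i$); an undirected (mutual) compatibility graph $\mathcal G=(V,E)$. An exchange among $W\subseteq V$ is a matching of $\mathcal G[W]$. The utility $u_i(M)$ of organization $i$ from a matching $M$ is the number of vertices of $U^i$ covered by $M$. Given a finite set $V^0$ of new vertices (additional altruistic donors, belonging to no organization), $\mathcal G^{+V^0}$ is obtained by adding the vertices of $V^0$, each joined by edges to an arbitrarily chosen set of vertices of $V$; exchanges in $\mathcal G^{+V^0}$ are its matchings. A nonempty coalition $P\subseteq N$ blocks a matching $M$ if there is a matching $M'$ of $\mathcal G[\bigcup_{i\in P}V^i]$ with $u_i(M')>u_i(M)$ for all $i\in P$. $M$ is in the $V^0$-supplemented core if it is a matching of $\mathcal G^{+V^0}$ blocked by no nonempty coalition. The $d$-supplemented core is nonempty if there exist a set $V^0$ with $|V^0|\le d$, a choice of its edges, and a matching in the $V^0$-supplemented core; otherwise it is empty. *)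

(* Defs.v *)
From mathcomp Require Import all_boot all_order all_algebra.
Set Implicit Arguments. Unset Strict Implicit. Unset Printing Implicit Defensive.
Import Order.TTheory GRing.Theory Num.Theory.

Definition is_matching (T : finType) (adj : rel T) (M : {set {set T}}) : Prop :=
  trivIset M /\ forall E, E \in M -> exists x y, adj x y /\ E = [set x; y].

Section Economy.
Variables (V : finType) (n : nat) (org : V -> 'I_n) (U : {set V}) (e : rel V).

(* Graph G^{+V^0}: V^0 = 'I_k; new vertex j is joined exactly to f j. *)
Definition suppl_adj (k : nat) (f : 'I_k -> {set V}) : rel (V + 'I_k) :=
  fun a b => match a, b with
  | inl x, inl y => e x y
  | inl x, inr j => x \in f j
  | inr j, inl x => x \in f j
  | inr _, inr _ => false
  end.

Definition utility (i : 'I_n) (C : {set V}) : nat :=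
  #|[set v in U | (org v == i) && (v \in C)]|.

Definition covered_V (k : nat) (M : {set {set (V + 'I_k)}}) : {set V} :=
  [set v | inl v \in cover M].

Definition blocks (P : {set 'I_n}) (C : {set V}) : Prop :=
  exists M' : {set {set V}},
    is_matching e M' /\
    (forall E, E \in M' -> forall v, v \in E -> org v \in P) /\
    (forall i, i \in P -> utility i C < utility i (cover M')).

Definition in_suppl_core (k : nat) (f : 'I_k -> {set V})
    (M : {set {set (V + 'I_k)}}) : Prop :=
  is_matching (suppl_adj f) M /\
  forall P : {set 'I_n}, P != set0 -> ~ blocks P (covered_V M).

(* The d-supplemented core is nonempty (d real; here rational). *)
Definition suppl_core_nonempty (d : rat) : Prop :=
  exists (k : nat) (f : 'I_k -> {set V}) (M : {set {set (V + 'I_k)}}),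
    (k%:R <= d)%R /\ in_suppl_core f M.

End Economy.

(* Main.v *)
Require Import Defs.
From mathcomp Require Import all_boot all_order all_algebra.
From mathcomp Require Import zify.
Set Implicit Arguments. Unset Strict Implicit. Unset Printing Implicit Defensive.

Lemma card_sum (T : finType) (a : pred T) : #|[set x | a x]| = \sum_(x : T) a x.
Proof.
rewrite -sum1_card big_mkcond /=; apply: eq_bigr => x _; rewrite inE; by case: (a x).
Qed.

Lemma count_sum (T : finType) (a : pred T) : count a (enum {: T}) = \sum_(x : T) a x.
Proof.
rewrite -sum1_count big_enum_cond big_mkcond /=; apply: eq_bigr => x _; by case: (a x).
Qed.

Lemma sum_pair (A B : finType) (f : A * B -> nat) :
  \sum_(v : A * B) f v = \sum_(a : A) \sum_(b : B) f (a, b).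
Proof. by rewrite pair_bigA; apply: eq_bigr => -[a b]. Qed.

Lemma card_VT t (F : nat -> ('I_4 * 'I_3) -> bool) :
  #|[set v : ('I_t * 'I_4) * 'I_3 | F v.1.1 (v.1.2, v.2)]| =
  \sum_(j < t) count (F j) (enum {: 'I_4 * 'I_3}).
Proof.
rewrite card_sum sum_pair sum_pair /=.
apply: eq_bigr => j _; rewrite count_sum sum_pair /=; by [].
Qed.

Lemma sum_if_nat t Y a b :
  \sum_(0 <= j < t) (if j < Y then a else b) = minn t Y * a + (t - Y) * b.
Proof.
elim: t => [|t IH]; first by rewrite big_geq // min0n sub0n.
rewrite big_nat_recr //= IH. case: ifP => h; nia.
Qed.

Lemma sum_if t Y a b : Y <= t ->
  \sum_(j < t) (if j < Y then a else b) = Y * a + (t - Y) * b.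
Proof.
move=> hY; rewrite -(big_mkord xpredT (fun j => if j < Y then a else b)) sum_if_nat.
have -> : minn t Y = Y by lia. by [].
Qed.

Section Gen.
Variables (V : finType) (n : nat) (org : V -> 'I_n) (U : {set V}) (e : rel V).

Lemma inv_pair (p : V -> V) (inv : forall v, p (p v) = v) v x :
  x \in [set v; p v] -> [set v; p v] = [set x; p x].
Proof. by case/set2P=> ->; rewrite ?inv // setUC. Qed.

Lemma block_of_inv (P : {set 'I_n}) (C : {set V}) (p : V -> V) :
  (forall v, p (p v) = v) ->
  (forall v, p v != v -> e v (p v) && (org v \in P)) ->
  (forall i, i \in P -> utility org U i C < utility org U i [set v | p v != v]) ->
  blocks org U e P C.
Proof.
move=> inv hp hu.
set D := [set v | p v != v].
have pD : forall v, v \in D -> p v \in D.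
  by move=> v; rewrite !inE => h; rewrite inv eq_sym.
have cov : cover [set [set v; p v] | v in D] = D.
  rewrite cover_imset; apply/setP=> x; apply/bigcupP/idP.
  - by case=> v vD /set2P[->|->] //; exact: pD.
  - by move=> xD; exists x => //; rewrite !inE eqxx.
exists [set [set v; p v] | v in D]; split; [split|split].
- apply/trivIsetP=> A B /imsetP[v vD ->] /imsetP[w wD ->] neq.
  apply/pred0P=> x /=; apply/negbTE/andP => -[xa xb].
  by move/eqP: neq; apply; rewrite (inv_pair inv xa) (inv_pair inv xb).
- move=> E /imsetP[v vD ->]; exists v, (p v); split => //.
  by rewrite inE in vD; case/andP: (hp v vD).
- move=> E /imsetP[v vD ->] w /set2P[->|->].
  + by rewrite inE in vD; case/andP: (hp v vD).
  + by have := pD v vD; rewrite inE => h; case/andP: (hp _ h).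
- by rewrite cov; exact: hu.
Qed.

End Gen.

Notation L := ('I_4 * 'I_3)%type.
Notation VT t := (('I_t * 'I_4) * 'I_3)%type.
Definition o0 : 'I_3 := @Ordinal 3 0 isT.
Definition o1 : 'I_3 := @Ordinal 3 1 isT.
Definition o2 : 'I_3 := @Ordinal 3 2 isT.
Definition ord3 (n : nat) : 'I_3 := match n with 0 => o0 | 1 => o1 | _ => o2 end.
Definition ord4 (n : nat) : 'I_4 :=
  match n with 0 => @Ordinal 4 0 isT | 1 => @Ordinal 4 1 isT | 2 => @Ordinal 4 2 isT
  | _ => @Ordinal 4 3 isT end.
Definition o3s : seq 'I_3 := [:: o0; o1; o2].
Definition o4s : seq 'I_4 := [:: ord4 0; ord4 1; ord4 2; ord4 3].
Definition Lall : seq L := [seq (a, b) | a <- o4s, b <- o3s].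
Lemma mem_o3 (x : 'I_3) : x \in o3s.
Proof. by case: x => [[|[|[|n]]] h]. Qed.
Lemma mem_o4 (x : 'I_4) : x \in o4s.
Proof. by case: x => [[|[|[|[|n]]]] h]. Qed.
Lemma mem_Lall x : x \in Lall.
Proof. case: x => a b; apply/allpairsP; exists (a, b); by rewrite mem_o3 mem_o4. Qed.
Lemma uniq_Lall : uniq Lall.
Proof. vm_compute. reflexivity. Qed.
Lemma count_Lall (a : pred L) : count a Lall = \sum_(x : L) a x.
Proof.
have /permP -> : perm_eq Lall (enum {: L}).
  by apply: uniq_perm; rewrite ?enum_uniq ?uniq_Lall // => x; rewrite mem_Lall mem_enum.
exact: count_sum.
Qed.

Definition orgL (x : L) : 'I_3 :=
  if x.1 < 3 then (if x.2 < 2 then ord3 x.1 else ord3 (x.1.+1 %% 3)) else x.2.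
Definition nxt (i : 'I_3) : 'I_3 := ord3 (i.+1 %% 3).
Definition pt (m a : nat) : L := (ord4 m, ord3 a).
Definition swp (x y z : L) : L := if z == x then y else if z == y then x else z.
Definition piS (i : 'I_3) : L -> L := swp (pt i 0) (pt i 1).
Definition piI (i : 'I_3) : L -> L :=
  fun z => swp (pt i 0) (pt i 1) (swp (pt (nxt i) 0) (pt (nxt i) 1) (swp (pt 3 i) (pt 3 (nxt i)) z)).
Definition piX (i : 'I_3) : L -> L :=
  fun z => swp (pt i 0) (pt i 2) (swp (pt (nxt i) 0) (pt (nxt i) 1) (swp (pt 3 i) (pt 3 (nxt i)) z)).
Definition goodb (P : pred 'I_3) (pi : L -> L) : bool :=
  all (fun x => (pi (pi x) == x) && ((pi x != x) ==> (((pi x).1 == x.1) && ((pi x).2 != x.2) && P (orgL x)))) Lall.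
Definition cntb (i : 'I_3) (pi : L -> L) : nat := count (fun x => (orgL x == i) && (pi x != x)) Lall.

Lemma local_facts : all (fun i : 'I_3 => goodb (pred1 i) (piS i) && goodb (pred2 i (nxt i)) (piI i)
   && goodb (pred2 i (nxt i)) (piX i)
     && (cntb i (piS i) == 2) && (cntb i (piI i) == 3) && (cntb (nxt i) (piI i) == 3)
     && (cntb i (piX i) == 2) && (cntb (nxt i) (piX i) == 4)) o3s.
Proof. vm_compute. reflexivity. Qed.

Lemma goodP P pi : goodb P pi -> forall x, pi (pi x) = x /\ (pi x).1 = x.1 /\
  (pi x != x -> (pi x).2 != x.2 /\ P (orgL x)).
Proof.
move=> /allP h x; have /andP[/eqP h1 h2] := h x (mem_Lall x).
split => //; case: (boolP (pi x != x)) => hx.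
- by move: h2; rewrite hx /= => /andP[/andP[/eqP -> ->] ->].
- by move/negPn/eqP: hx => ->.
Qed.

Definition orgV t (v : VT t) : 'I_3 := orgL (v.1.2, v.2).
Definition eV t : rel (VT t) := fun v w => (v.1 == w.1) && (v.2 != w.2).

Definition liftp t (Y : nat) (pi1 pi2 : L -> L) (v : VT t) : VT t :=
  let x := (if v.1.1 < Y then pi1 else pi2) (v.1.2, v.2) in ((v.1.1, x.1), x.2).

Lemma lift_block t Y pi1 pi2 (P : pred 'I_3) (Ps : {set 'I_3}) (C : {set VT t}) :
  goodb P pi1 -> goodb P pi2 -> (forall i, P i -> i \in Ps) -> Y <= t ->
  (forall i, i \in Ps -> utility (@orgV t) setT i C < Y * cntb i pi1 + (t - Y) * cntb i pi2) ->
  blocks (@orgV t) setT (@eV t) Ps C.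
Proof.
move=> g1 g2 PPs hY hu.
have g : forall v : VT t, goodb P (if v.1.1 < Y then pi1 else pi2) by move=> v; case: ifP.
have neqE : forall v : VT t, (liftp Y pi1 pi2 v != v) =
    ((if v.1.1 < Y then pi1 else pi2) (v.1.2, v.2) != (v.1.2, v.2)).
  move=> [[j m] a] /=; rewrite /liftp /=.
  by case: ((if j < Y then pi1 else pi2) (m, a)) => m' a'; rewrite !xpair_eqE eqxx.
apply: (block_of_inv (p := liftp Y pi1 pi2)).
- move=> [[j m] a]; rewrite /liftp /= -!surjective_pairing.
  have [h1 _] := goodP (g ((j, m), a)) (m, a). by rewrite /= in h1; rewrite h1.
- move=> [[j m] a]; rewrite neqE /= => hv.
  have [_ [h2 h3]] := goodP (g ((j, m), a)) (m, a).
  have [h4 h5] := h3 hv. rewrite /= in h2 h4 h5.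
  rewrite /eV /orgV /liftp /= h2 eqxx eq_sym h4 /=; exact: PPs.
- move=> i iP; have := hu i iP.
  suff -> : utility (@orgV t) setT i [set v | liftp Y pi1 pi2 v != v] =
            Y * cntb i pi1 + (t - Y) * cntb i pi2 by [].
  rewrite /utility.
  pose F := fun (j : nat) (x : L) => (orgL x == i) && ((if j < Y then pi1 else pi2) x != x).
  have -> : [set v in setT | (orgV v == i) && (v \in [set v | liftp Y pi1 pi2 v != v])] =
     [set v : VT t | F v.1.1 (v.1.2, v.2)].
    by apply/setP=> v; rewrite !inE neqE.
  rewrite (@card_VT t F) -sum_if //; apply: eq_bigr => j _; rewrite count_sum /cntb !count_Lall /F; by case: (j < Y).
Qed.

Lemma card_split2 (A B : finType) (S : {set A * B}) :
  #|S| = \sum_(a : A) #|[set b | (a, b) \in S]|.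
Proof.
have -> : S = [set x | x \in S] by apply/setP=> x; rewrite inE.
rewrite card_sum sum_pair; apply: eq_bigr => a _; by rewrite card_sum; apply: eq_bigr => b _; rewrite inE.
Qed.

Definition i0 : 'I_3 := o0.
Definition i1 : 'I_3 := o1.
Definition i2 : 'I_3 := o2.

Lemma tri3 : all (fun b0 : 'I_3 => all (fun b1 : 'I_3 => all (fun b2 : 'I_3 =>
  (b0 != i0) ==> (b1 != i1) ==> (b2 != i2) ==>
   [&& has (fun x => (x \in [:: i0; b0]) && (x \in [:: i1; b1])) o3s,
       has (fun x => (x \in [:: i1; b1]) && (x \in [:: i2; b2])) o3s &
       ~~ (((i1 == i0) || (i1 == b0)) && ((i2 == i0) || (i2 == b0)))]) o3s)
   o3s) o3s.
Proof. vm_compute. reflexivity. Qed.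

Section Grand.
Variables (t k : nat) (f : 'I_k -> {set VT t}) (M : {set {set (VT t + 'I_k)}}).
Hypothesis HM : is_matching (suppl_adj (@eV t) f) M.

Lemma uniqE E1 E2 x : E1 \in M -> E2 \in M -> x \in E1 -> x \in E2 -> E1 = E2.
Proof.
case: HM => /trivIsetP h _ h1 h2 x1 x2; apply/eqP; apply/negPn/negP => ne.
by have := h _ _ h1 h2 ne; move/pred0P/(_ x) => /=; rewrite x1 x2.
Qed.

Definition Dn := [set v : VT t | [exists j : 'I_k, [set inl v; inr j] \in M]].

Lemma Dn_card : #|Dn| <= k.
Proof.
pose h (v : VT t) : option 'I_k := [pick j | [set inl v; inr j] \in M].
have hS : forall v, v \in Dn -> exists2 j, h v = Some j & [set inl v; inr j] \in M.
  move=> v; rewrite inE => /existsP[j0 hj0]; rewrite /h.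
  case: pickP => [j hj | none]; first by exists j.
  by have := none j0; rewrite hj0.
rewrite -(card_in_imset (f := h)); last first.
  move=> v w vD wD; have [j hv mv] := hS v vD; have [j' hw mw] := hS w wD.
  rewrite hv hw => -[ejj]; subst j'.
  have E := uniqE (x := inr j) mv mw.
  rewrite !inE eqxx orbT in E.
  have {}E := E isT isT.
  have : inl v \in [set inl w; inr j] by rewrite -E !inE eqxx.
  by rewrite !inE => /orP[/eqP[]|].
have : h @: Dn \subset [set~ None].
  apply/subsetP=> x /imsetP[v vD ->]; have [j -> _] := hS v vD; by rewrite !inE.
move/subset_leq_card; rewrite cardsC1 card_option card_ord //.
Qed.

Lemma partner (v : VT t) : v \in covered_V M -> v \notin Dn ->
  exists w : VT t, @eV t v w /\ [set inl v; inl w] \in M.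
Proof.
rewrite inE => /bigcupP[E EM vE] nD.
case: HM => _ /(_ E EM) [x [y [xy Exy]]]; subst E.
have sym : forall a b : VT t, @eV t a b -> @eV t b a.
  by move=> a b; rewrite /eV /= (eq_sym a.1) (eq_sym a.2).
move: xy EM; move/set2P: vE => [<-|<-].
- case: y => [w|j] /= h EM; first by exists w.
  by case/negP: nD; rewrite inE; apply/existsP; exists j.
- case: x => [w|j] /= h EM; first by exists w; split; [exact: sym | rewrite setUC].
  by case/negP: nD; rewrite inE; apply/existsP; exists j; rewrite setUC.
Qed.

Lemma tri_bound tau :
  #|[set a | (tau, a) \in covered_V M]| <= 2 + #|[set a | (tau, a) \in Dn]|.
Proof.
case: (boolP [forall a, ((tau, a) \in covered_V M) && ((tau, a) \notin Dn)]) => [hall | /forallPn [a0]].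
  exfalso.
  have get : forall a, exists2 b, b != a & [set inl (tau, a); inl (tau, b)] \in M.
    move=> a; have /andP[hc hd] := forallP hall a.
    have [w [/andP[/eqP e1 ne] mw]] := partner hc hd.
    exists w.2; first by rewrite eq_sym.
    by rewrite [w]surjective_pairing -e1 in mw.
  have [b0 n0 m0] := get i0; have [b1 n1 m1] := get i1; have [b2 n2 m2] := get i2.
  have /allP/(_ b0 (mem_o3 _))/allP/(_ b1 (mem_o3 _))/allP/(_ b2 (mem_o3 _)) := tri3.
  rewrite n0 n1 n2 !implyTb => /and3P[/hasP[x _ /andP[x0 x1]] /hasP[z _ /andP[z1 z2]] hn].
  have inE2 : forall a b c, c \in [:: a; b] -> inl (tau, c) \in [set inl (tau, a); inl (tau, b) : VT t + 'I_k].
    by move=> a b c; rewrite !inE => /orP[/eqP->|/eqP->]; rewrite eqxx ?orbT.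
  have E01 := uniqE m0 m1 (inE2 _ _ _ x0) (inE2 _ _ _ x1).
  have E12 := uniqE m1 m2 (inE2 _ _ _ z1) (inE2 _ _ _ z2).
  have h1 : inl (tau, i1) \in [set inl (tau, i0); inl (tau, b0) : VT t + 'I_k].
    by rewrite E01 !inE eqxx.
  have h2 : inl (tau, i2) \in [set inl (tau, i0); inl (tau, b0) : VT t + 'I_k].
    by rewrite E01 E12 !inE eqxx.
  have out2 : forall a b c, inl (tau, c) \in [set inl (tau, a); inl (tau, b) : VT t + 'I_k] ->
      (c == a) || (c == b).
    have inlE : forall p q : VT t, (inl p == inl q :> VT t + 'I_k) = (p == q).
      by move=> p q; apply/eqP/eqP => [[]|->].
    by move=> a b c; rewrite !inE !inlE !xpair_eqE !eqxx.
  by rewrite (out2 _ _ _ h1) (out2 _ _ _ h2) in hn.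
rewrite negb_and negbK => /orP[nc|nd].
  have : [set a | (tau, a) \in covered_V M] \subset [set~ a0].
    by apply/subsetP=> a; rewrite inE in_setC1; apply: contraTneq => ->.
  by move/subset_leq_card; rewrite cardsC1 card_ord => h; apply: leq_trans h _.
have : 0 < #|[set a | (tau, a) \in Dn]| by apply/card_gt0P; exists a0; rewrite inE.
have := max_card [set a | (tau, a) \in covered_V M]; rewrite card_ord.
move=> h1 h2; apply: (leq_trans h1); lia.
Qed.

Lemma grand_bound : #|covered_V M| <= 8 * t + k.
Proof.
rewrite card_split2.
apply: (@leq_trans (\sum_(tau : 'I_t * 'I_4) (2 + #|[set a | (tau, a) \in Dn]|))).
  by apply: leq_sum => tau _; exact: tri_bound.
rewrite big_split /= sum_nat_const card_prod !card_ord -card_split2.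
have -> : t * 4 * 2 = 8 * t by lia. rewrite leq_add2l; exact: Dn_card.
Qed.
End Grand.

Lemma card_byorg (V : finType) (org : V -> 'I_3) (C : {set V}) :
  #|C| = \sum_(i : 'I_3) #|[set v in setT | (org v == i) && (v \in C)]|.
Proof.
have E : forall i, #|[set v in setT | (org v == i) && (v \in C)]| =
    \sum_(v : V) ((org v == i) && (v \in C)).
  by move=> i; rewrite -card_sum; apply: eq_card => v; rewrite !inE.
rewrite (eq_bigr _ (fun i _ => E i)) exchange_big /=.
transitivity #|[set v | v \in C]|; first by apply: eq_card => v; rewrite inE.
rewrite card_sum; apply: eq_bigr => v _.
rewrite (bigD1 (org v)) //= eqxx /= big1 ?addn0 // => i ne.
by rewrite eq_sym (negbTE ne).
Qed.

Lemma sum3 (F : 'I_3 -> nat) : \sum_(i : 'I_3) F i = F i0 + F i1 + F i2.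
Proof.
rewrite !big_ord_recl big_ord0 addn0 addnA.
by congr (F _ + F _ + F _); apply: val_inj.
Qed.

Lemma nxt0 : nxt i0 = i1. Proof. by apply: val_inj. Qed.
Lemma nxt1 : nxt i1 = i2. Proof. by apply: val_inj. Qed.
Lemma nxt2 : nxt i2 = i0. Proof. by apply: val_inj. Qed.

From mathcomp Require Import ring lra.
Import GRing.Theory Num.Theory.

Theorem mainTheorem2 :
  forall m : nat,
  exists (V : finType) (org : V -> 'I_3) (U : {set V}) (e : rel V),
    symmetric e /\ irreflexive e /\ m <= #|V| /\
    ~ suppl_core_nonempty org U e (#|V|%:R / 18 - 3)%R.
Proof.
move=> m.
have cardV : #|{: VT m}| = m * 4 * 3 by rewrite !card_prod !card_ord.
exists (VT m), (@orgV m), setT, (@eV m).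
split; first by move=> v w; rewrite /eV eq_sym (eq_sym v.2).
split; first by move=> v; rewrite /eV /= !eqxx.
split; first by rewrite cardV; lia.
move=> [k [f [M [hk [HM hnb]]]]].
have hk' : 18 * k + 54 <= 12 * m.
  have : ((18 * k + 54)%:R <= (12 * m)%:R :> rat)%R.
    move: hk; rewrite cardV natrD !natrM. lra.
  by rewrite ler_nat.
set C := covered_V M.
pose u i := utility (@orgV m) setT i C.
have hsum : u i0 + u i1 + u i2 <= 8 * m + k.
  rewrite -(sum3 u) /u /utility -card_byorg. exact: (grand_bound HM).
have lf := allP local_facts.
have lfi : forall i, [/\ goodb (pred1 i) (piS i), goodb (pred2 i (nxt i)) (piI i),
    goodb (pred2 i (nxt i)) (piX i), cntb i (piS i) = 2 &
    [/\ cntb i (piI i) = 3, cntb (nxt i) (piI i) = 3, cntb i (piX i) = 2 & cntb (nxt i) (piX i) = 4]].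
  move=> i; have := lf i (mem_o3 i).
  move=> /andP[/andP[/andP[/andP[/andP[/andP[/andP[gS gI] gX] /eqP cS] /eqP cI1] /eqP cI2] /eqP cX1] /eqP cX2].
  by split.
have hS : forall i, 2 * m <= u i.
  move=> i; rewrite leqNgt; apply/negP => hlt.
  have [gS _ _ cS _] := lfi i.
  apply: (hnb [set i]); first by apply/set0Pn; exists i; rewrite inE.
  apply: (@lift_block m 0 (piS i) (piS i) (pred1 i)) => //.
  - by move=> j /= /eqP ->; rewrite inE.
  - move=> j; rewrite inE => /eqP ->; rewrite cS; move: hlt; rewrite /u /C /=; lia.
have hP : forall i Y, Y <= m -> ~ (u i < 3 * m - Y /\ u (nxt i) < 3 * m + Y).
  move=> i Y hY [ha hb].
  have [_ gI gX _ [c1 c2 c5 c6]] := lfi i.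
  apply: (hnb [set i; nxt i]); first by apply/set0Pn; exists i; rewrite !inE eqxx.
  apply: (@lift_block m Y (piX i) (piI i) (pred2 i (nxt i))) => //.
  - by move=> j /= /orP[/eqP->|/eqP->]; rewrite !inE eqxx ?orbT.
  - move=> j /set2P[->|->].
    + rewrite c5 c1; move: ha; rewrite /u /C /=; lia.
    + rewrite c6 c2; move: hb; rewrite /u /C /=; lia.
have := hS i0; have := hS i1; have := hS i2.
have := hP i0 (3 * m - 1 - u i0); have := hP i1 (3 * m - 1 - u i1); have := hP i2 (3 * m - 1 - u i2).
rewrite nxt0 nxt1 nxt2.
move: hsum hk'. lia.
Qed.
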